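(* Let $\eta>0$, $L>0$, $\nu>0$ with $\eta\le L$. Define error functions recursively by a scalar $e_0>0$ and $$e_k(\gamma_0,\dots,\gamma_{k-1})=(1-\eta\gamma_{k-1})\,e_{k-1}(\gamma_0,\dots,\gamma_{k-2})+\gamma_{k-1}^2\nu^2,\qquad k\ge1,$$ where $e_0$ satisfies $\frac{\eta}{2\nu^2}e_0\le\frac1L$. Let $\gamma_0^*=\frac{\eta}{2\nu^2}e_0$ and $\gamma_k^*=\gamma_{k-1}^*\big(1-\frac{\eta}{2}\gamma_{k-1}^*\big)$ for $k\ge1$. Then: (a) $e_k(\gamma_0^*,\dots,\gamma_{k-1}^* )=\frac{2\nu^2}{\eta}\gamma_k^*$ for all $k\ge0$; (b) for each $k\ge1$, $(\gamma_0^*,\dots,\gamma_{k-1}^* )$ minimizes $e_k$ over $\mathbb{G}_k=\{\alpha\in\mathbb{R}^k:0<\alpha_j\le\frac1L,\ j=1,\dots,k\}$; more precisely, for any $k\ge1$ and any $(\gamma_0,\dots,\gamma_{k-1})\in\mathbb{G}_k$, $e_k(\gamma_0,\dots,\gamma_{k-1})-e_k(\gamma_0^*,\dots,\gamma_{k-1}^* )\ge\nu^2(\gamma_{k-1}-\gamma_{k-1}^* )^2$; (c) $(\gamma_0^*,\dots,\gamma_{k-1}^* )$ is a stationary point of $e_k$ over $\mathbb{G}_k$.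
   Context: In the paper, $\eta$ is the strong convexity constant and $L$ the Lipschitz constant of the gradient of the objective $f$ (hence $\eta\le L$), and $\nu^2$ is an upper bound on the conditional second moments $\mathbb{E}[\|w_k\|^2\mid\mathcal{F}_k]$ of the stochastic gradient errors. *)

(* Defs.v *)
From Stdlib Require Import Reals Lra Lia.
From Coquelicot Require Import Coquelicot.
Open Scope R_scope.

(* Error recursion e_k(gamma_0,...,gamma_{k-1}); a step-size vector is
   represented by a sequence g : nat -> R of which only g 0 .. g (k-1)
   are used by err ... g k. *)
Fixpoint err (eta nu e0 : R) (g : nat -> R) (k : nat) : R :=
  match k with
  | O => e0
  | S k' => (1 - eta * g k') * err eta nu e0 g k' + (g k') ^ 2 * nu ^ 2
  end.

Fixpoint gstar (eta nu e0 : R) (k : nat) : R :=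
  match k with
  | O => eta / (2 * nu ^ 2) * e0
  | S k' => gstar eta nu e0 k' * (1 - eta / 2 * gstar eta nu e0 k')
  end.

Definition gstar_upd (eta nu e0 : R) (j : nat) (t : R) : nat -> R :=
  fun i => if Nat.eqb i j then t else gstar eta nu e0 i.

(* Main.v *)
Require Import Defs.
From Stdlib Require Import Reals Lra Lia.
From Coquelicot Require Import Coquelicot.
Open Scope R_scope.

Lemma err_ext eta nu e0 g h k :
  (forall i, (i < k)%nat -> g i = h i) -> err eta nu e0 g k = err eta nu e0 h k.
Proof.
  induction k; intros H; simpl; auto.
  rewrite IHk by (intros; apply H; lia). rewrite H by lia. reflexivity.
Qed.

Lemma part_a eta nu e0 : 0 < eta -> 0 < nu -> forall k,
  err eta nu e0 (gstar eta nu e0) k = 2 * nu ^ 2 / eta * gstar eta nu e0 k.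
Proof.
  intros He Hn; induction k; simpl.
  - field. split; lra || (apply pow_nonzero; lra).
  - rewrite IHk. field. lra.
Qed.

Theorem proposition2 (eta L nu e0 : R) :
  0 < eta -> 0 < L -> 0 < nu -> eta <= L -> 0 < e0 ->
  eta / (2 * nu ^ 2) * e0 <= 1 / L ->
  (* (a) *)
  (forall k : nat,
      err eta nu e0 (gstar eta nu e0) k = 2 * nu ^ 2 / eta * gstar eta nu e0 k) /\
  (* (b) *)
  (forall (k : nat) (g : nat -> R), (1 <= k)%nat ->
      (forall j : nat, (j < k)%nat -> 0 < g j <= 1 / L) ->
      err eta nu e0 g k - err eta nu e0 (gstar eta nu e0) k
        >= nu ^ 2 * (g (k - 1)%nat - gstar eta nu e0 (k - 1)%nat) ^ 2) /\
  (* (c) every partial derivative of e_k vanishes at gamma^* *)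
  (forall k j : nat, (1 <= k)%nat -> (j < k)%nat ->
      is_derive (fun t => err eta nu e0 (gstar_upd eta nu e0 j t) k)
                (gstar eta nu e0 j) 0).
Proof.
  intros He HL Hn HeL He0 Hg0.
  assert (A := part_a eta nu e0 He Hn).
  assert (Hstep : forall g k, err eta nu e0 g (S k) - err eta nu e0 (gstar eta nu e0) (S k)
     = (1 - eta * g k) * (err eta nu e0 g k - err eta nu e0 (gstar eta nu e0) k)
       + nu ^ 2 * (g k - gstar eta nu e0 k) ^ 2).
  { intros g k. change (err eta nu e0 g (S k)) with
      ((1 - eta * g k) * err eta nu e0 g k + (g k) ^ 2 * nu ^ 2).
    change (err eta nu e0 (gstar eta nu e0) (S k)) with
      ((1 - eta * gstar eta nu e0 k) * err eta nu e0 (gstar eta nu e0) k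
        + (gstar eta nu e0 k) ^ 2 * nu ^ 2).
    rewrite A. field. lra. }
  assert (Hle : / L <= / eta) by (apply Rinv_le_contravar; lra).
  assert (Hnn : forall k g, (forall j, (j < k)%nat -> 0 < g j <= 1 / L) ->
      err eta nu e0 g k - err eta nu e0 (gstar eta nu e0) k >= 0).
  { induction k; intros g Hg.
    - simpl; lra.
    - rewrite Hstep.
      assert (H1 := Hg k (Nat.lt_succ_diag_r k)).
      assert (0 <= 1 - eta * g k).
      { assert (Hx : eta * g k <= eta * / eta).
        { apply Rmult_le_compat_l; lra. }
        rewrite Rinv_r in Hx; lra. }
      assert (IH := IHk g (fun j Hj => Hg j (ltac:(lia)))).
      assert (0 <= nu ^ 2 * (g k - gstar eta nu e0 k) ^ 2).
      { apply Rmult_le_pos; apply pow2_ge_0. }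
      assert (0 <= (1 - eta * g k) * (err eta nu e0 g k - err eta nu e0 (gstar eta nu e0) k))
        by (apply Rmult_le_pos; lra).
      lra. }
  split; [exact A|split].
  - intros k g Hk Hg. destruct k as [|k]; [lia|].
    replace (S k - 1)%nat with k by lia.
    rewrite Hstep.
    assert (H1 := Hg k (Nat.lt_succ_diag_r k)).
    assert (0 <= 1 - eta * g k).
    { assert (Hx : eta * g k <= eta * / eta).
      { apply Rmult_le_compat_l; lra. }
      rewrite Rinv_r in Hx; lra. }
    assert (IH := Hnn k g (fun j Hj => Hg j (ltac:(lia)))).
    assert (0 <= (1 - eta * g k) * (err eta nu e0 g k - err eta nu e0 (gstar eta nu e0) k))
      by (apply Rmult_le_pos; lra).
    lra.
  - intros k j _ _. induction k.
    + simpl. apply (is_derive_const e0).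
    + simpl. destruct (Nat.eq_dec k j) as [->|Hkj].
      * assert (E : forall t, err eta nu e0 (gstar_upd eta nu e0 j t) j
                      = err eta nu e0 (gstar eta nu e0) j).
        { intros t. apply err_ext. intros i Hi. unfold gstar_upd.
          destruct (Nat.eqb_spec i j); [lia|reflexivity]. }
        apply (is_derive_ext (fun t => (1 - eta * t) * err eta nu e0 (gstar eta nu e0) j
                                        + t ^ 2 * nu ^ 2)).
        { intros t. rewrite E. unfold gstar_upd. rewrite Nat.eqb_refl. reflexivity. }
        rewrite A. auto_derive; auto. field. lra.
      * set (c := gstar eta nu e0 k).
        assert (U : forall t, gstar_upd eta nu e0 j t k = c).
        { intros t. unfold gstar_upd. destruct (Nat.eqb_spec k j); [lia|reflexivity]. }
        apply (is_derive_ext (fun t => plus ((1 - eta * c) * err eta nu e0 (gstar_upd eta nu e0 j t) k)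
                                        (c ^ 2 * nu ^ 2))).
        { intros t. rewrite U. reflexivity. }
        replace 0 with (plus ((1 - eta * c) * 0) (@zero R_NormedModule)).
        2:{ unfold plus, zero; simpl. ring. }
        exact (is_derive_plus (fun t => (1 - eta * c) * err eta nu e0 (gstar_upd eta nu e0 j t) k)
                 (fun _ => c ^ 2 * nu ^ 2) _ _ _
                 (is_derive_scal _ _ _ _ IHk) (is_derive_const _ _)).
Qed.
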